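(* Let $R$ be a DT ring. Then $6\in J(R)$.
   Context: All rings are associative with identity; $J(R)$ is the Jacobson radical, $U(R)$ the group of units. $\Delta(R)=\{x\in R: x+u\in U(R)\text{ for all }u\in U(R)\}$. $\mathrm{Tr}(R)=\{x\in R: x^3=x\}$. A ring $R$ is a DT ring if every $r\in R$ can be written $r=e+d$ with $e\in\mathrm{Tr}(R)$ and $d\in\Delta(R)$. *)

(* Defs.v *)
From mathcomp Require Import all_boot all_algebra.
Set Implicit Arguments. Unset Strict Implicit. Unset Printing Implicit Defensive.
Import GRing.Theory.
Local Open Scope ring_scope.

(* Jacobson radical membership, via the standard element-wise characterization:
   x \in J(R)  <->  1 - r x is a unit for every r \in R. *)
Definition in_jacobson (R : unitRingType) (x : R) : Prop :=
  forall r : R, (1 - r * x) \is a GRing.unit.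

Definition in_Delta (R : unitRingType) (x : R) : Prop :=
  forall u : R, u \is a GRing.unit -> (x + u) \is a GRing.unit.

Definition tripotent (R : unitRingType) (x : R) : Prop := x ^+ 3 = x.

Definition DT_ring (R : unitRingType) : Prop :=
  forall r : R, exists e d : R, tripotent e /\ in_Delta d /\ r = e + d.

(* Main.v *)
Require Import Defs.
From mathcomp Require Import all_boot all_algebra.
From mathcomp Require Import ring.
Local Open Scope ring_scope.
Import GRing.Theory.

Section Delta.
Variable R : unitRingType.

Lemma D0 : in_Delta (0 : R).
Proof. by move=> u Hu; rewrite add0r. Qed.

Lemma DD (x y : R) : in_Delta x -> in_Delta y -> in_Delta (x + y).
Proof. by move=> Hx Hy u Hu; rewrite -addrA; apply/Hx/Hy. Qed.

Lemma DN (x : R) : in_Delta x -> in_Delta (- x).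
Proof.
move=> Hx u Hu; rewrite -[u]opprK -opprD unitrN; apply: Hx; by rewrite unitrN.
Qed.

Lemma DMn (x : R) n : in_Delta x -> in_Delta (x *+ n).
Proof. move=> Hx; elim: n => [|n IH]; first by rewrite mulr0n; apply: D0.
by rewrite mulrS; apply: DD. Qed.

Lemma DMur (x u : R) : in_Delta x -> u \is a GRing.unit -> in_Delta (x * u).
Proof.
move=> Hx Hu w Hw.
have -> : x * u + w = (x + w * u^-1) * u by rewrite mulrDl -mulrA mulVr // mulr1.
by rewrite unitrMl //; apply: Hx; rewrite unitrMl // unitrV.
Qed.

Lemma DMul (x u : R) : in_Delta x -> u \is a GRing.unit -> in_Delta (u * x).
Proof.
move=> Hx Hu w Hw.
have -> : u * x + w = u * (x + u^-1 * w) by rewrite mulrDr mulrA divrr // mul1r.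
by rewrite unitrMr //; apply: Hx; rewrite unitrMr // unitrV.
Qed.

Lemma DM (x y : R) : in_Delta x -> in_Delta y -> in_Delta (x * y).
Proof.
move=> Hx Hy.
have -> : x * y = x * (y + 1) - x by rewrite mulrDr mulr1 addrK.
apply: DD; last exact: DN.
by apply: DMur => //; apply: Hy; exact: unitr1.
Qed.

Lemma Dunit (x : R) : in_Delta x -> (1 + x) \is a GRing.unit.
Proof. by move=> Hx; rewrite addrC; apply: Hx; exact: unitr1. Qed.

End Delta.

Theorem corollary2p8 (R : unitRingType) : DT_ring R -> in_jacobson (6%:R : R).
Proof.
move=> HDT.
have D6 : in_Delta (6%:R : R).
  have [e [d [He [Hd H2]]]] := HDT (2%:R : R).
  have cfu : commr_rmorph (intr : int -> R) e by move=> z; exact: commr_int.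

  have hX : (horner_morph cfu) 'X = e by rewrite horner_morphX.
  have hC : forall z : int, (horner_morph cfu) z%:P = z%:~R by move=> z; rewrite horner_morphC.
  have hd : (horner_morph cfu) (2%:R - 'X) = d.
    by rewrite rmorphB /= rmorph_nat hX H2 addrC addKr.
  have key : 6%:R = (2%:R - 'X) *+ 11 - ((2%:R - 'X)*(2%:R - 'X)) *+ 6
     + (2%:R - 'X)*((2%:R - 'X)*(2%:R - 'X)) + ('X*('X*'X) - 'X) :> {poly int}.
    by ring.
  have : (horner_morph cfu) 6%:R = 6%:R by rewrite rmorph_nat.
  move: (2%:R - 'X) hd key => q hd key.
  rewrite key !rmorphD !rmorphN !rmorphMn !rmorphM /= hd hX.
  have -> : e * (e * e) - e = 0 by rewrite mulrA -expr2 -exprSr He subrr.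
  rewrite addr0 => <-.
  by repeat first [exact: Hd | apply: DMn | apply: DM | apply: DN | apply: DD].
move=> r.
have [e [d [He [Hd ->]]]] := HDT r.
rewrite commr_nat mulrDr opprD addrA.
have Hu : (1 - 6%:R * e) \is a GRing.unit.
  have Hc : GRing.comm (1 - 6%:R * e) (1 + 6%:R * e).
    exact: (commrD (commr1 _) (commr_sym (commrB (commr1 (6%:R * e)) (commr_refl _)))).
  suff : (1 - 6%:R * e) * (1 + 6%:R * e) \is a GRing.unit.
    by rewrite unitrM_comm // => /andP[].
  pose f := e * e.
  have He' : e * (e * e) = e by rewrite -[RHS]He /= !exprS expr0 mulr1.
  have ff : f * f = f by rewrite /f -mulrA He'.
  have cfu : commr_rmorph (intr : int -> R) e by move=> z; exact: commr_int.
  have hX : (horner_morph cfu) 'X = e by rewrite horner_morphX.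
  have E : (1 - 6%:R*'X)*(1+6%:R*'X)
     = 1 + (18%:R*(1 - 2%:R*('X*'X)) - 18%:R) :> {poly int} by ring.
  have := congr1 (horner_morph cfu) E.
  rewrite !(rmorph_nat, rmorph1, rmorphM, rmorphB, rmorphD).
  set x := (_ (polyX _)); have -> : x = e by exact: hX.
  move=> ->.

  have D18 : in_Delta (18%:R : R) by have := @DMn R _ 3 D6; rewrite -mulrnA.
  suff HD : in_Delta (18%:R * (1 - 2%:R * f) - 18%:R).
    by rewrite addrC; apply: HD; exact: unitr1.
  apply: DD; last by apply: DN.
  apply: DMur => //.
  have w2 : (1 - 2%:R * f) * (1 - 2%:R * f) = 1.
    rewrite !mulr_natl mulrBl mul1r mulrBr mulr1 mulrnAl mulrnAr ff -mulrnA.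
    by rewrite -[(2*2)%N]/(2+2)%N mulrnDr opprB addrK subrK.
  by apply/unitrP; exists (1 - 2%:R * f).
rewrite addrC.
apply: (@DN R _ (@DM R _ _ D6 Hd)).
exact: Hu.
Qed.
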